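(* Let $R$ be a semiprime ring, $I$ an ideal of $R$, and $c\in I$ an element that is regular in $I$ (i.e. for $s\in I$, $sc=0$ implies $s=0$ and $cs=0$ implies $s=0$). Let $M=\mathrm{ann}_R(I)$. Then (1) $\mathrm{l.ann}_R(c)=\mathrm{r.ann}_R(c)=M$, and (2) $\eta(c)$ is regular (neither a left nor a right zero divisor) in the factor ring $R/M$, where $\eta\colon R\to R/M$ is the canonical epimorphism.
   Context: For $A\subseteq R$: $\mathrm{l.ann}_R(A)=\{r\in R\mid rA=0\}$, $\mathrm{r.ann}_R(A)=\{r\in R\mid Ar=0\}$, $\mathrm{ann}_R(A)=\{r\in R\mid rA=Ar=0\}$. *)

(* Defs.v *)
From mathcomp Require Import all_boot all_algebra.
Set Implicit Arguments. Unset Strict Implicit. Unset Printing Implicit Defensive.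
Import GRing.Theory.
Local Open Scope ring_scope.

Definition is_ideal (R : pzRingType) (I : R -> Prop) : Prop :=
  I 0 /\ (forall x y, I x -> I y -> I (x - y)) /\
  (forall r x, I x -> I (r * x) /\ I (x * r)).

Definition nilpotent_ideal (R : pzRingType) (I : R -> Prop) : Prop :=
  exists n : nat, forall s : seq R, size s = n -> (forall x, x \in s -> I x) ->
    \prod_(x <- s) x = 0.

Definition semiprime (R : pzRingType) : Prop :=
  forall I : R -> Prop, is_ideal I -> nilpotent_ideal I -> forall x, I x -> x = 0.

Definition l_ann (R : pzRingType) (A : R -> Prop) : R -> Prop :=
  fun r => forall a, A a -> r * a = 0.
Definition r_ann (R : pzRingType) (A : R -> Prop) : R -> Prop :=
  fun r => forall a, A a -> a * r = 0.
Definition ann (R : pzRingType) (A : R -> Prop) : R -> Prop :=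
  fun r => forall a, A a -> r * a = 0 /\ a * r = 0.

Definition singl (R : pzRingType) (c : R) : R -> Prop := fun x => x = c.

Definition regular_in (R : pzRingType) (I : R -> Prop) (c : R) : Prop :=
  forall s, I s -> (s * c = 0 -> s = 0) /\ (c * s = 0 -> s = 0).

(* The factor ring R/M, represented via the canonical map eta : R -> R/M:
   eta x = eta y  iff  x - y \in M.  eta(c) is regular in R/M iff it is
   neither a left nor a right zero divisor there. *)
Definition eta_eq (R : pzRingType) (M : R -> Prop) (x y : R) : Prop := M (x - y).

Definition regular_mod (R : pzRingType) (M : R -> Prop) (c : R) : Prop :=
  forall r : R,
    (eta_eq M (c * r) 0 -> eta_eq M r 0) /\ (eta_eq M (r * c) 0 -> eta_eq M r 0).

(* Main.v *)
Require Import Defs.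
From mathcomp Require Import all_boot all_algebra.
Local Open Scope ring_scope.
Import GRing.Theory.

Lemma key (R : pzRingType) (y : R) :
  semiprime R -> (forall u, y * u * y = 0) -> y = 0.
Proof.
move=> sp Hy.
pose J := fun z : R => exists s : seq (R * R), z = \sum_(p <- s) p.1 * y * p.2.
have hJ : is_ideal J.
  split; first by exists [::]; rewrite big_nil.
  split.
    move=> a b [sa ->] [sb ->].
    exists (sa ++ map (fun p => (- p.1, p.2)) sb).
    by rewrite big_cat big_map /= -sumrN; congr (_ + _); apply: eq_bigr => p _; rewrite !mulNr.
  move=> r x [s ->]; split.
    exists (map (fun p => (r * p.1, p.2)) s).
    by rewrite big_map mulr_sumr; apply: eq_bigr => p _ /=; rewrite !mulrA.
  exists (map (fun p => (p.1, p.2 * r)) s).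
  by rewrite big_map mulr_suml; apply: eq_bigr => p _ /=; rewrite !mulrA.
apply: (sp J hJ); last by exists [:: (1, 1)]; rewrite big_seq1 /= mul1r mulr1.
exists 2%N => s.
case: s => [|a [|b [|? ?]]] //= _ Hin.
rewrite big_cons big_seq1.
have [sa ->] := Hin a (mem_head _ _).
have [sb ->] : J b by apply: Hin; rewrite !inE eqxx orbT.
rewrite mulr_suml; apply: big1 => p _; rewrite mulr_sumr; apply: big1 => q _.
have e : p.1 * y * p.2 * (q.1 * y * q.2) = p.1 * (y * (p.2 * q.1) * y) * q.2.
  by rewrite !mulrA.
by rewrite e Hy mulr0 mul0r.
Qed.

Theorem lemma1 (R : pzRingType) (I : R -> Prop) (c : R) :
  semiprime R -> is_ideal I -> I c -> regular_in I c ->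
  (forall x, l_ann (singl c) x <-> ann I x) /\
  (forall x, r_ann (singl c) x <-> ann I x) /\
  regular_mod (ann I) c.
Proof.
move=> sp [I0 [IB IM]] Ic reg.
have IL : forall r x, I x -> I (r * x) by move=> r x /(IM r) [].
have IR : forall r x, I x -> I (x * r) by move=> r x /(IM r) [].
split.
  move=> x; split.
    move=> H; have xc : x * c = 0 by apply: H.
    have sx : forall s, I s -> s * x = 0.
      move=> s Is; apply: (proj1 (reg _ (IR x _ Is))).
      by rewrite -mulrA xc mulr0.
    move=> s Is; split; last exact: sx.
    apply: key => // u.
    have e : x * s * u * (x * s) = x * ((s * u) * x) * s by rewrite !mulrA.
    by rewrite e sx ?mulr0 ?mul0r //; apply: IR.
  by move=> H a ->; case: (H c Ic).
split.
  move=> x; split.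
    move=> H; have cx : c * x = 0 by apply: H.
    have xs : forall s, I s -> x * s = 0.
      move=> s Is; apply: (proj2 (reg _ (IL x _ Is))).
      by rewrite mulrA cx mul0r.
    move=> s Is; split; first exact: xs.
    apply: key => // u.
    have e : s * x * u * (s * x) = s * (x * (u * s)) * x by rewrite !mulrA.
    by rewrite e xs ?mulr0 ?mul0r //; apply: IL.
  by move=> H a ->; case: (H c Ic).
move=> r; rewrite /eta_eq !subr0; split.
  move=> H.
  have rs : forall s, I s -> r * s = 0.
    move=> s Is; apply: (proj2 (reg _ (IL r _ Is))).
    by rewrite mulrA; case: (H s Is).
  move=> s Is; split; first exact: rs.
  apply: key => // u.
  have e : s * r * u * (s * r) = s * (r * (u * s)) * r by rewrite !mulrA.
  by rewrite e rs ?mulr0 ?mul0r //; apply: IL.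
move=> H.
have sr : forall s, I s -> s * r = 0.
  move=> s Is; apply: (proj1 (reg _ (IR r _ Is))).
  by rewrite -mulrA; case: (H s Is).
move=> s Is; split; last exact: sr.
apply: key => // u.
have e : r * s * u * (r * s) = r * ((s * u) * r) * s by rewrite !mulrA.
by rewrite e sr ?mulr0 ?mul0r //; apply: IR.
Qed.
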